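(* With $\mathsf{pure}\ x := \hat x$ and $\mathsf{ap}\ F\ x := F@x$, the step functions satisfy the applicative functor laws up to $\asymp_{\mathfrak{S}}$ (where the setoids of function types carry extensional equality): for all appropriately typed $u,v,w$ (step functions) and $f$, $x$, $y$ (values), (Identity) $\hat{\mathbf{I}} @ v \asymp v$; (Composition) $\hat{\mathbf{B}} @ u @ v @ w \asymp u @ (v @ w)$; (Homomorphism) $\hat f @ \hat x \asymp \widehat{f x}$; (Interchange) $u @ \hat y \asymp \widehat{\mathrm{ev}_y} @ u$, where $\mathbf{I}x := x$, $\mathbf{B}fgx := f(gx)$ and $\mathrm{ev}_y := \lambda f. f\,y$.
   Context: Step functions. For a type $X$, $\mathfrak{S}X$ is the inductive type of (formal, rational) step functions on $[0,1]$: it has the constructors $\mathsf{const}\ x$ for $x\in X$ (also written $\hat x$), and $\mathsf{glue}\ o\ f\ g$ for $o\in(0,1)\cap\mathbb{Q}$ and $f,g\in\mathfrak{S}X$. Split. For $a\in(0,1)\cap\mathbb{Q}$: $\mathsf{SplitL}\ \hat x\ a := \hat x$, $\mathsf{SplitR}\ \hat x\ a:=\hat x$, and $\mathsf{SplitL}(\mathsf{glue}\ o\ f_l\ f_r)\ a :=$ $\mathsf{SplitL}\ f_l\ (a/o)$ if $a<o$; $f_l$ if $a=o$; $\mathsf{glue}\ (o/a)\ f_l\ (\mathsf{SplitL}\ f_r\ \tfrac{a-o}{1-o})$ if $a>o$. $\mathsf{SplitR}(\mathsf{glue}\ o\ f_l\ f_r)\ a :=$ $\mathsf{glue}\ \tfrac{o-a}{1-a}\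 (\mathsf{SplitR}\ f_l\ (a/o))\ f_r$ if $a<o$; $f_r$ if $a=o$; $\mathsf{SplitR}\ f_r\ \tfrac{a-o}{1-o}$ if $a>o$. Map and ap. $\mathsf{map}\ \varphi\ \hat x := \widehat{\varphi x}$, $\mathsf{map}\ \varphi\ (\mathsf{glue}\ o\ f\ g):=\mathsf{glue}\ o\ (\mathsf{map}\ \varphi\ f)(\mathsf{map}\ \varphi\ g)$. For $F\in\mathfrak{S}(X\Rightarrow Y)$, $x\in\mathfrak{S}X$: $\hat\varphi @ x := \mathsf{map}\ \varphi\ x$, and $(\mathsf{glue}\ o\ F_l\ F_r) @ x := \mathsf{glue}\ o\ (F_l @ \mathsf{SplitL}\ x\ o)\ (F_r @ \mathsf{SplitR}\ x\ o)$. $@$ associates to the left. Write $f\{\circledast\}g := (\lambda u v. u\circledast v)\circ f @ g$ where $\varphi\circ x:=\mathsf{map}\ \varphi\ x$. Fold. $\mathsf{fold}\ \varphi\ \psi\ \hat x:=\varphi x$, $\mathsf{fold}\ \varphi\ \psi\ (\mathsf{glue}\ o\ f\ g) := \psi\ o\ (\mathsf{fold}\ \varphi\ \psi\ f)(\mathsf{fold}\ \varphi\ \psi\ g)$. $\mathsf{fold}_\star$ is $\mathsf{fold}\ \mathrm{id}\ (\lambda o\,p\,q.\ p\wedge q)$. Equivalence. For a setoid $X$ and $f,g\in\mathfrak{S}X$, $f\asymp_{\mathfrak{S}X} g := \mathsf{fold}_\star(f\{\asymp_X\}g)$. *)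

(* Defs.v *)
From HB Require Import structures.
From mathcomp Require Import all_boot all_order all_algebra.
Set Implicit Arguments. Unset Strict Implicit. Unset Printing Implicit Defensive.
Import Order.TTheory GRing.Theory Num.Theory.
From Stdlib Require Import RelationClasses.
Local Open Scope ring_scope.

Definition unit_open (q : rat) : bool := (0 < q) && (q < 1).
Definition Q01 := {q : rat | unit_open q}.

(* Formal rational step functions on [0,1]. *)
Inductive Step (X : Type) : Type :=
| const : X -> Step X
| glue : Q01 -> Step X -> Step X -> Step X.
Arguments const {X} _.
Arguments glue {X} _ _ _.

Lemma ratio_open_l (a o : rat) : unit_open a -> unit_open o -> a < o -> unit_open (a / o).
Proof.
move=> /andP[a0 a1] /andP[o0 o1] ao; apply/andP; split.
  by rewrite divr_gt0.
by rewrite ltr_pdivrMr // mul1r.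
Qed.

Lemma ratio_open_r (a o : rat) : unit_open a -> unit_open o -> o < a ->
  unit_open ((a - o) / (1 - o)).
Proof.
move=> /andP[a0 a1] /andP[o0 o1] oa; apply/andP; split.
  by rewrite divr_gt0 // subr_gt0.
by rewrite ltr_pdivrMr ?subr_gt0 // mul1r ltrD2r.
Qed.

Lemma ratio_open_gl (a o : rat) : unit_open a -> unit_open o -> o < a -> unit_open (o / a).
Proof. by move=> Ha Ho oa; apply: ratio_open_l. Qed.

Lemma ratio_open_gr (a o : rat) : unit_open a -> unit_open o -> a < o ->
  unit_open ((o - a) / (1 - a)).
Proof. by move=> Ha Ho ao; apply: ratio_open_r. Qed.

Definition cmp3 (a o : rat) : {a < o} + {a = o} + {o < a}.
Proof.
case: (boolP (a < o)) => h; first by left; left.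
case: (boolP (o < a)) => h'; first by right.
left; right; move: h h'; case: ltgtP => //.
Defined.

(* SplitL f a : the part of f on [0,a], rescaled to [0,1]. *)
Fixpoint SplitL {X} (f : Step X) (a : Q01) : Step X :=
  match f with
  | const x => const x
  | glue o fl fr =>
      match cmp3 (val a) (val o) with
      | inleft (left ao) => SplitL fl (exist unit_open _ (ratio_open_l (valP a) (valP o) ao))
      | inleft (right _) => fl
      | inright oa =>
          glue (exist unit_open _ (ratio_open_gl (valP a) (valP o) oa)) fl
               (SplitL fr (exist unit_open _ (ratio_open_r (valP a) (valP o) oa)))
      end
  end.

(* SplitR f a : the part of f on [a,1], rescaled to [0,1]. *)
Fixpoint SplitR {X} (f : Step X) (a : Q01) : Step X :=
  match f with
  | const x => const x
  | glue o fl fr =>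
      match cmp3 (val a) (val o) with
      | inleft (left ao) =>
          glue (exist unit_open _ (ratio_open_gr (valP a) (valP o) ao))
               (SplitR fl (exist unit_open _ (ratio_open_l (valP a) (valP o) ao))) fr
      | inleft (right _) => fr
      | inright oa => SplitR fr (exist unit_open _ (ratio_open_r (valP a) (valP o) oa))
      end
  end.

Fixpoint smap {X Y} (phi : X -> Y) (f : Step X) : Step Y :=
  match f with
  | const x => const (phi x)
  | glue o f g => glue o (smap phi f) (smap phi g)
  end.

Fixpoint sap {X Y} (F : Step (X -> Y)) (x : Step X) : Step Y :=
  match F with
  | const phi => smap phi x
  | glue o Fl Fr => glue o (sap Fl (SplitL x o)) (sap Fr (SplitR x o))
  end.

Fixpoint sfold {X Y} (phi : X -> Y) (psi : Q01 -> Y -> Y -> Y) (f : Step X) : Y :=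
  match f with
  | const x => phi x
  | glue o f g => psi o (sfold phi psi f) (sfold phi psi g)
  end.

Definition fold_star (f : Step Prop) : Prop := sfold id (fun _ p q => p /\ q) f.

Record Setoid := { carrier :> Type; eqv : carrier -> carrier -> Prop;
                   eqv_equiv : RelationClasses.Equivalence eqv }.

Definition fun_eqv (X Y : Setoid) (f g : X -> Y) : Prop := forall x, eqv (f x) (g x).
Lemma fun_eqv_equiv (X Y : Setoid) : RelationClasses.Equivalence (@fun_eqv X Y).
Proof.
have E := eqv_equiv Y; split.
- by move=> f x; apply: (@Equivalence_Reflexive _ _ E).
- by move=> f g H x; apply: (@Equivalence_Symmetric _ _ E).
- by move=> f g h H1 H2 x; apply: (@Equivalence_Transitive _ _ E _ _ _ (H1 x) (H2 x)).
Qed.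
Definition FunSetoid (X Y : Setoid) : Setoid :=
  {| carrier := X -> Y; eqv := @fun_eqv X Y; eqv_equiv := fun_eqv_equiv X Y |}.

Definition slift2 {X Y Z} (op : X -> Y -> Z) (f : Step X) (g : Step Y) : Step Z :=
  sap (smap op f) g.

Definition step_eqv (X : Setoid) (f g : Step X) : Prop :=
  fold_star (slift2 (@eqv X) f g).

Definition pure {X} (x : X) : Step X := const x.
Definition combI {X : Type} (x : X) : X := x.
Definition combB {X Y Z : Type} (f : Y -> Z) (g : X -> Y) (x : X) : Z := f (g x).
Definition ev {X Y : Type} (y : X) (f : X -> Y) : Y := f y.
Arguments step_eqv X f g : clear implicits.

(* Main.v *)
Require Import Defs.
From HB Require Import structures.
From mathcomp Require Import all_boot all_order all_algebra.
Set Implicit Arguments. Unset Strict Implicit. Unset Printing Implicit Defensive.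
From Stdlib Require Import RelationClasses.
Import Order.TTheory GRing.Theory Num.Theory.
Local Open Scope ring_scope.

Fixpoint seval {X} (f : Step X) (L H t : rat) : X :=
  match f with
  | const x => x
  | glue o l r => if t < L + sval o * (H - L) then seval l L (L + sval o * (H - L)) t
                  else seval r (L + sval o * (H - L)) H t
  end.

Lemma addKB (x y : rat) : x + y - x = y.
Proof. by rewrite addrC addKr. Qed.

Lemma arA (x y d : rat) : y != 0 -> x / y * (y * d) = x * d.
Proof. by move=> y0; rewrite mulrA divfK. Qed.

Lemma arB (x y L H : rat) : x != 1 ->
  L + x * (H - L) + (y - x) / (1 - x) * (H - (L + x * (H - L))) = L + y * (H - L).
Proof.
move=> x1.
have -> : H - (L + x * (H - L)) = (1 - x) * (H - L).
  by rewrite mulrBl mul1r opprD addrA.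
rewrite arA ?subr_eq0 1?eq_sym //.
by rewrite -addrA; congr (_ + _); rewrite mulrBl addrC subrK.
Qed.

Lemma mid_lt (o : Q01) (L H : rat) : L < H ->
  L < L + sval o * (H - L) /\ L + sval o * (H - L) < H.
Proof.
case: o => o /= /andP[o0 o1] LH.
have D0 : 0 < H - L by rewrite subr_gt0.
split; first by rewrite ltrDl mulr_gt0.
have : o * (H - L) < H - L by rewrite gtr_pMl.
by rewrite -(ltrD2l L) [L + (H - L)]addrC subrK.
Qed.

Lemma splitL_eval X (f : Step X) (a : Q01) L H t :
  L < H -> L <= t -> t < L + sval a * (H - L) ->
  seval (SplitL f a) L (L + sval a * (H - L)) t = seval f L H t.
Proof.
elim: f a L H t => [x|o fl IHl fr IHr] a L H t LH Lt tm //=.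
have [Lmo moH] := mid_lt o LH.
have a0 : 0 < sval a by case/andP: (valP a).
have o0 : 0 < sval o by case/andP: (valP o).
have o1 : sval o < 1 by case/andP: (valP o).
have [Lm mH] := mid_lt a LH.
case: cmp3 => [[ao|ao]|oa].
- have mmo : L + sval a * (H - L) < L + sval o * (H - L).
    by rewrite ltrD2l ltr_pM2r // subr_gt0.
  rewrite (lt_trans tm mmo).
  have := IHl (exist unit_open _ (ratio_open_l (valP a) (valP o) ao)) L
    (L + sval o * (H - L)) t Lmo Lt.
  by rewrite /= addKB arA ?gt_eqF // => ->.
- by move: tm; rewrite ao => tm; rewrite tm.
- have E : sval o / sval a * (L + sval a * (H - L) - L) = sval o * (H - L).
    by rewrite addKB arA // gt_eqF.
  rewrite /= E; case: ifP => // tmo.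
  have := IHr (exist unit_open _ (ratio_open_r (valP a) (valP o) oa))
    (L + sval o * (H - L)) H t moH.
  rewrite /= arB ?lt_eqF // => -> //.
  by rewrite leNgt tmo.
Qed.

Lemma splitR_eval X (f : Step X) (a : Q01) L H t :
  L < H -> L + sval a * (H - L) <= t -> t < H ->
  seval (SplitR f a) (L + sval a * (H - L)) H t = seval f L H t.
Proof.
elim: f a L H t => [x|o fl IHl fr IHr] a L H t LH mt tH //=.
have [Lmo moH] := mid_lt o LH.
have a0 : 0 < sval a by case/andP: (valP a).
have a1 : sval a < 1 by case/andP: (valP a).
have o0 : 0 < sval o by case/andP: (valP o).
have o1 : sval o < 1 by case/andP: (valP o).
have [Lm mH] := mid_lt a LH.
case: cmp3 => [[ao|ao]|oa].
- rewrite /= arB ?lt_eqF //.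
  case: ifP => // tmo.
  have := IHl (exist unit_open _ (ratio_open_l (valP a) (valP o) ao)) L
    (L + sval o * (H - L)) t Lmo.
  by rewrite /= addKB arA ?gt_eqF // => ->.
- have ao' : sval a = sval o := ao.
  rewrite ao'; move: mt; rewrite ao' => mt.
  by rewrite ltNge mt.
- have mmo : L + sval o * (H - L) < L + sval a * (H - L).
    by rewrite ltrD2l ltr_pM2r // subr_gt0.
  rewrite ltNge (ltW (lt_le_trans mmo mt)) /=.
  have := IHr (exist unit_open _ (ratio_open_r (valP a) (valP o) oa))
    (L + sval o * (H - L)) H t moH.
  by rewrite /= arB ?lt_eqF // => ->.
Qed.

Lemma smap_eval X Y (phi : X -> Y) f L H t :
  seval (smap phi f) L H t = phi (seval f L H t).
Proof.
by elim: f L H t => [x|o fl IHl fr IHr] L H t //=; case: ifP.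
Qed.

Lemma sap_eval X Y (F : Step (X -> Y)) x L H t :
  L < H -> L <= t -> t < H -> seval (sap F x) L H t = seval F L H t (seval x L H t).
Proof.
elim: F x L H t => [phi|o Fl IHl Fr IHr] x L H t LH Lt tH /=.
  by rewrite smap_eval.
have [Lmo moH] := mid_lt o LH.
case: ifP => tmo.
  by rewrite IHl // splitL_eval.
rewrite IHr ?splitR_eval // ?leNgt ?tmo //.
Qed.

Lemma fold_star_eval (h : Step Prop) L H :
  L < H -> (forall t, L <= t -> t < H -> seval h L H t) -> fold_star h.
Proof.
rewrite /fold_star.
elim: h L H => [p|o hl IHl hr IHr] L H LH Ht /=.
  by apply: (Ht L) => //.
have [Lmo moH] := mid_lt o LH.
split.
  apply: (IHl L (L + sval o * (H - L))) => // t Lt tm.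
  by have := Ht t Lt (lt_trans tm moH); rewrite /= tm.
apply: (IHr (L + sval o * (H - L)) H) => // t mt tH.
have := Ht t (le_trans (ltW Lmo) mt) tH; rewrite /= ltNge mt //.
Qed.

Lemma step_eqv_eval (X : Setoid) (f g : Step X) :
  (forall t, 0 <= t -> t < 1 -> eqv (seval f 0 1 t) (seval g 0 1 t)) ->
  step_eqv X f g.
Proof.
move=> Ht; apply: (fold_star_eval (L := 0) (H := 1)) => // t Lt tH.
by rewrite /slift2 sap_eval // smap_eval; apply: Ht.
Qed.

Lemma eqv_refl (X : Setoid) (x : X) : eqv x x.
Proof. exact: (@Equivalence_Reflexive _ _ (eqv_equiv X)). Qed.

Theorem mainTheorem4 :
  (* Identity *)
  (forall (X : Setoid) (v : Step X),
      step_eqv X (sap (pure (@combI X)) v) v) /\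
  (* Composition *)
  (forall (X Y Z : Setoid) (u : Step (Y -> Z)) (v : Step (X -> Y)) (w : Step X),
      step_eqv Z (sap (sap (sap (pure (@combB X Y Z)) u) v) w) (sap u (sap v w))) /\
  (* Homomorphism *)
  (forall (X Y : Setoid) (f : X -> Y) (x : X),
      step_eqv Y (sap (pure f) (pure x)) (pure (f x))) /\
  (* Interchange *)
  (forall (X Y : Setoid) (u : Step (X -> Y)) (y : X),
      step_eqv Y (sap u (pure y)) (sap (pure (@ev X Y y)) u)).
Proof.
split; [|split; [|split]].
- move=> X v; apply: step_eqv_eval => t t0 t1.
  rewrite sap_eval //; exact: eqv_refl.
- move=> X Y Z u v w; apply: step_eqv_eval => t t0 t1.
  rewrite !sap_eval //; exact: eqv_refl.
- move=> X Y f x; apply: step_eqv_eval => t t0 t1; exact: eqv_refl.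
- move=> X Y u y; apply: step_eqv_eval => t t0 t1.
  rewrite !sap_eval //; exact: eqv_refl.
Qed.
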